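(* Let $\Theta$ be a causal theory over $\mathfrak L$. Every sequent derivable in the sequent calculus $\mathbf{S}_\Theta$ has a derivation in $\mathbf{S}_\Theta$ that does not use the multicut rule.
   Context: $\mathfrak L$ is a classical propositional language (atoms, $\neg,\wedge,\vee,\to,\top,\perp$). A causal rule is $\phi\triangleright\psi$ with $\phi,\psi\in\mathfrak L$; a causal theory $\Theta$ is a set of causal rules. $\mathcal L_\Box$ is generated by $\mathfrak L$ and a unary operator $\Box$. The sequent calculus $\mathbf S_\Theta$ derives sequents $\Gamma\vdash_\Box\Delta$ with $\Gamma,\Delta$ collections of $\mathcal L_\Box$-formulas; derivations are well-founded, possibly infinitely branching trees. Its rules: axiom $p\vdash_\Box p$; $\perp\vdash_\Box$; $\vdash_\Box\top$; left and right weakening and contraction; the classical two-sided rules: $\neg$L (from $\Gamma\vdash_\Box p,\Delta$ infer $\Gamma,\neg p\vdash_\Box\Delta$), $\neg$R (from $\Gamma,p\vdash_\Box\Delta$ infer $\Gamma\vdash_\Box\neg p,\Delta$), $\wedge$L (from $\Gamma,p,q\vdash_\Box\Delta$ infer $\Gamma,p\wedge q\vdash_\Box\Delta$), $\wedge$R (from $\Gamma\vdash_\Box p,\Delta$ and $\Gamma\vdash_\Box q,\Delta$ infer $\Gamma\vdash_\Box p\wedge q,\Delta$), $\vee$L (from $\Gamma,p\vdash_\Box\Delta$ and $\Gamma,q\vdash_\Box\Delta$ infer $\Gamma,p\vee q\vdash_\Box\Delta$), $\vee$R (from $\Gamma\vdash_\Box p,q,\Delta$ infer $\Gamma\vdash_\Box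 p\vee q,\Delta$), $\to$L (from $\Gamma\vdash_\Box p,\Delta$ and $\Gamma,q\vdash_\Box\Delta$ infer $\Gamma,p\to q\vdash_\Box\Delta$), $\to$R (from $\Gamma,p\vdash_\Box q,\Delta$ infer $\Gamma\vdash_\Box p\to q,\Delta$); $\Box$R: if $\phi_1\triangleright\psi_1,\dots,\phi_k\triangleright\psi_k\in\Theta$ and $\psi_1,\dots,\psi_k\vdash_\Box p$ is derivable, then from $\Gamma\vdash_\Box\phi_1\wedge\dots\wedge\phi_k,\Delta$ infer $\Gamma\vdash_\Box\Box p,\Delta$ (empty conjunction $=\top$); $\Box$L: letting $\{S_j\}_{j\in J}$ be the family of all finite sets $S_j\subseteq\Theta$ such that $\{\psi:\phi\triangleright\psi\in S_j\}\vdash_\Box p$ is derivable ($J$ may be infinite), from the premises $\Gamma,\{\phi:\phi\triangleright\psi\in S_j\}\vdash_\Box\Delta$ for all $j\in J$ infer $\Gamma,\Box p\vdash_\Box\Delta$; multicut: from $\Gamma\vdash_\Box p^m,\Delta$ and $\Gamma',p^n\vdash_\Box\Delta'$ ($m,n>0$, $p^n$ meaning $n$ occurrences of $p$) infer $\Gamma,\Gamma'\vdash_\Box\Delta,\Delta'$. *)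

(* Defs.v *)
From Stdlib Require Import List Permutation.
Import ListNotations.

(* Formulas of L_Box: propositional atoms, connectives, and a unary Box
   (nesting allowed).  The classical language frak-L is the Box-free part. *)
Inductive form : Type :=
| Var : nat -> form
| Neg : form -> form
| And : form -> form -> form
| Or  : form -> form -> form
| Imp : form -> form -> form
| Top : form
| Bot : form
| Box : form -> form.

Fixpoint boxfree (f : form) : Prop :=
  match f with
  | Var _ | Top | Bot => True
  | Neg a => boxfree a
  | And a b | Or a b | Imp a b => boxfree a /\ boxfree b
  | Box _ => False
  end.

Definition causal_theory := form -> form -> Prop.

Definition is_causal_theory (Th : causal_theory) : Prop :=
  forall phi psi, Th phi psi -> boxfree phi /\ boxfree psi.

Fixpoint bigAnd (l : list form) : form :=
  match l with
  | [] => Top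
  | [a] => a
  | a :: l' => And a (bigAnd l')
  end.

(* Sequents are pairs of lists, read as
   multisets (rule [d_perm]).  [cut] says whether multicut is allowed.
   [SC ps p] is the side condition "ps |- p is derivable" used by the Box
   rules; in S_Theta it must coincide with derivability in S_Theta itself
   (see the theorem).  Derivations are well-founded, possibly infinitely
   branching (rule d_boxL quantifies over all finite S subset Theta). *)
Inductive Der (Th : causal_theory) (SC : list form -> form -> Prop) (cut : bool)
  : list form -> list form -> Prop :=
| d_perm : forall G G' D D', Permutation G G' -> Permutation D D' ->
    Der Th SC cut G D -> Der Th SC cut G' D'
| d_ax : forall p, Der Th SC cut [p] [p]
| d_bot : Der Th SC cut [Bot] []
| d_top : Der Th SC cut [] [Top]
| d_wL : forall G D p, Der Th SC cut G D -> Der Th SC cut (p :: G) D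
| d_wR : forall G D p, Der Th SC cut G D -> Der Th SC cut G (p :: D)
| d_cL : forall G D p, Der Th SC cut (p :: p :: G) D -> Der Th SC cut (p :: G) D
| d_cR : forall G D p, Der Th SC cut G (p :: p :: D) -> Der Th SC cut G (p :: D)
| d_negL : forall G D p, Der Th SC cut G (p :: D) -> Der Th SC cut (Neg p :: G) D
| d_negR : forall G D p, Der Th SC cut (p :: G) D -> Der Th SC cut G (Neg p :: D)
| d_andL : forall G D p q, Der Th SC cut (p :: q :: G) D ->
    Der Th SC cut (And p q :: G) D
| d_andR : forall G D p q, Der Th SC cut G (p :: D) -> Der Th SC cut G (q :: D) ->
    Der Th SC cut G (And p q :: D)
| d_orL : forall G D p q, Der Th SC cut (p :: G) D -> Der Th SC cut (q :: G) D ->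
    Der Th SC cut (Or p q :: G) D
| d_orR : forall G D p q, Der Th SC cut G (p :: q :: D) ->
    Der Th SC cut G (Or p q :: D)
| d_impL : forall G D p q, Der Th SC cut G (p :: D) -> Der Th SC cut (q :: G) D ->
    Der Th SC cut (Imp p q :: G) D
| d_impR : forall G D p q, Der Th SC cut (p :: G) (q :: D) ->
    Der Th SC cut G (Imp p q :: D)
| d_boxR : forall G D p (S : list (form * form)),
    (forall r, In r S -> Th (fst r) (snd r)) ->
    SC (map snd S) p ->
    Der Th SC cut G (bigAnd (map fst S) :: D) ->
    Der Th SC cut G (Box p :: D)
| d_boxL : forall G D p,
    (forall S : list (form * form), NoDup S ->
       (forall r, In r S -> Th (fst r) (snd r)) ->
       SC (map snd S) p ->
       Der Th SC cut (map fst S ++ G) D) ->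
    Der Th SC cut (Box p :: G) D
| d_mcut : cut = true -> forall G D G' D' p m n, 0 < m -> 0 < n ->
    Der Th SC cut G (repeat p m ++ D) -> Der Th SC cut (repeat p n ++ G') D' ->
    Der Th SC cut (G ++ G') (D ++ D').

(* Main.v *)
Require Import Defs.
From Stdlib Require Import List Permutation Lia.
Import ListNotations.

Definition form_eq_dec : forall x y : form, {x = y} + {x <> y}.
Proof. decide equality; apply PeanoNat.Nat.eq_dec. Defined.

Definition rm (A : form) (l : list form) :=
  filter (fun x => if form_eq_dec x A then false else true) l.
Arguments rm : simpl never.

Lemma rm_In A l x : In x (rm A l) <-> In x l /\ x <> A.
Proof. unfold rm; rewrite filter_In; destruct (form_eq_dec x A); intuition congruence. Qed.

Section S.
Variable Th : causal_theory.
Variable SC : list form -> form -> Prop.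

Lemma wkL c X G D : Der Th SC c G D -> Der Th SC c (X ++ G) D.
Proof. induction X; simpl; auto. intros; apply d_wL; auto. Qed.
Lemma wkR c X G D : Der Th SC c G D -> Der Th SC c G (X ++ D).
Proof. induction X; simpl; auto. intros; apply d_wR; auto. Qed.

Lemma ctrL c L1 L2 D : Der Th SC c (L1 ++ L2) D -> incl L1 L2 -> Der Th SC c L2 D.
Proof.
  revert L2. induction L1 as [|a L1 IH]; simpl; intros L2 H Hi; auto.
  assert (Ha : In a L2) by (apply Hi; left; auto).
  apply IH; [| intros x Hx; apply Hi; right; auto].
  destruct (in_split a L2) as [l1 [l2 E]]; auto. subst L2.
  apply (d_perm _ _ _ (a :: L1 ++ l1 ++ l2) _ D D).
  - rewrite !app_assoc. apply Permutation_middle.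
  - apply Permutation_refl.
  - apply d_cL. apply (d_perm _ _ _ (a :: L1 ++ l1 ++ a :: l2) _ D D); auto.
    constructor. rewrite !app_assoc. symmetry. apply Permutation_middle.
Qed.

Lemma ctrR c L1 L2 G : Der Th SC c G (L1 ++ L2) -> incl L1 L2 -> Der Th SC c G L2.
Proof.
  revert L2. induction L1 as [|a L1 IH]; simpl; intros L2 H Hi; auto.
  assert (Ha : In a L2) by (apply Hi; left; auto).
  apply IH; [| intros x Hx; apply Hi; right; auto].
  destruct (in_split a L2) as [l1 [l2 E]]; auto. subst L2.
  apply (d_perm _ _ _ G G (a :: L1 ++ l1 ++ l2)).
  - apply Permutation_refl.
  - rewrite !app_assoc. apply Permutation_middle.
  - apply d_cR. apply (d_perm _ _ _ G G (a :: L1 ++ l1 ++ a :: l2)); auto.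
    constructor. rewrite !app_assoc. symmetry. apply Permutation_middle.
Qed.

Lemma struct c G D G' D' : Der Th SC c G D -> incl G G' -> incl D D' -> Der Th SC c G' D'.
Proof.
  intros H HG HD.
  apply (ctrL c G G'); auto. apply (ctrR c D D'); auto.
  apply (d_perm _ _ _ (G' ++ G) _ (D' ++ D)); try apply Permutation_app_comm.
  apply wkL, wkR; auto.
Qed.

Lemma bigAnd_L c L : forall X D, Der Th SC c (L ++ X) D -> Der Th SC c (bigAnd L :: X) D.
Proof.
  induction L as [|a L IH]; intros X D H.
  - simpl. apply d_wL; auto.
  - destruct L as [|b L']. simpl in *; auto.
    change (bigAnd (a :: b :: L')) with (And a (bigAnd (b :: L'))).
    apply d_andL. apply (d_perm _ _ _ (bigAnd (b :: L') :: a :: X) _ D D);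
      [apply perm_swap | apply Permutation_refl |].
    apply IH. apply (d_perm _ _ _ (a :: (b :: L') ++ X) _ D D); auto.
    apply Permutation_middle.
Qed.

Lemma bf_bigAnd l : (forall x, In x l -> boxfree x) -> boxfree (bigAnd l).
Proof.
  induction l as [|a l IH]; intros H; simpl; auto.
  destruct l; simpl in *; auto.
Qed.

End S.

Ltac solve_incl := unfold incl in *; let x := fresh "x" in let Hx := fresh "Hx" in
  intros x Hx; repeat progress (simpl in *; rewrite ?in_app_iff, ?rm_In in * );
  intuition (subst; eauto using Permutation_in, Permutation_sym; try congruence).

Ltac via G D := apply (struct _ _ _ G D); [ | solve_incl | solve_incl].

Definition cutprop Th SC B := forall G D G2 D2, Der Th SC false G (B :: D) ->
  Der Th SC false (B :: G2) D2 -> Der Th SC false (G ++ G2) (D ++ D2).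

Definition smaller (A B : form) : Prop :=
  match A with
  | Neg p => B = p
  | And p q | Or p q | Imp p q => B = p \/ B = q
  | Box _ => boxfree B
  | _ => False
  end.

Definition Data Th SC (A : form) Gc Dc : Prop :=
  match A with
  | Neg p => Der Th SC false (p :: Gc) Dc
  | And p q => Der Th SC false Gc (p :: Dc) /\ Der Th SC false Gc (q :: Dc)
  | Or p q => Der Th SC false Gc (p :: q :: Dc)
  | Imp p q => Der Th SC false (p :: Gc) (q :: Dc)
  | Top => True
  | Box p => exists S, (forall r, In r S -> Th (fst r) (snd r)) /\ SC (map snd S) p /\
       Der Th SC false Gc (bigAnd (map fst S) :: Dc)
  | _ => False
  end.

Lemma Data_ax Th SC A Gc Dc : Data Th SC A Gc Dc -> Der Th SC false Gc (A :: Dc).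
Proof.
  destruct A; simpl; intros HD; try contradiction.
  - apply d_negR; auto.
  - destruct HD; apply d_andR; auto.
  - apply d_orR; auto.
  - apply d_impR; auto.
  - via (@nil form) [Top]. apply d_top.
  - destruct HD as [S [H1 [H2 H3]]]. eapply d_boxR; eauto.
Qed.

Definition pair_dec : forall x y : form * form, {x = y} + {x <> y}.
Proof. decide equality; apply form_eq_dec. Defined.

Lemma L2 Th SC (HT : is_causal_theory Th)
  (HSC : forall ps p, SC ps p <-> Der Th SC true ps (p :: nil))
  A (IHc : forall B, smaller A B -> cutprop Th SC B) Gc Dc (HD : Data Th SC A Gc Dc) :
  forall G0 Dr, Der Th SC false G0 Dr -> Der Th SC false (Gc ++ rm A G0) (Dc ++ Dr).
Proof.
  intros G0 Dr H. induction H.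
  - via (Gc ++ rm A G) (Dc ++ D). auto.
  - destruct (form_eq_dec p A).
    + subst A. via Gc (p :: Dc). apply Data_ax; auto.
    + via [p] [p]. apply d_ax.
  - destruct (form_eq_dec Bot A).
    + subst A; simpl in HD; contradiction.
    + via [Bot] (@nil form). apply d_bot.
  - via (@nil form) [Top]. apply d_top.
  - via (Gc ++ rm A G) (Dc ++ D). auto.
  - via (Gc ++ rm A G) (Dc ++ D). auto.
  - via (Gc ++ rm A (p :: p :: G)) (Dc ++ D). auto.
  - via (Gc ++ rm A G) (Dc ++ p :: p :: D). auto.
  -
    destruct (form_eq_dec (Neg p) A).
    + subst A. simpl in HD.
      assert (H1 := IHc p eq_refl (Gc ++ rm (Neg p) G) (Dc ++ D) Gc Dc
                 ltac:(via (Gc ++ rm (Neg p) G) (Dc ++ p :: D); exact IHDer) HD).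
      via ((Gc ++ rm (Neg p) G) ++ Gc) ((Dc ++ D) ++ Dc). exact H1.
    + via (Neg p :: Gc ++ rm A G) (Dc ++ D). apply d_negL.
      via (Gc ++ rm A G) (Dc ++ p :: D). exact IHDer.
  - via (Gc ++ rm A G) (Neg p :: Dc ++ D). apply d_negR.
    via (Gc ++ rm A (p :: G)) (Dc ++ D). exact IHDer.
  -
    destruct (form_eq_dec (And p q) A).
    + subst A. simpl in HD. destruct HD as [Hp Hq].
      assert (H1 := IHc p (or_introl eq_refl) Gc Dc (q :: Gc ++ rm (And p q) G) (Dc ++ D) Hp
        ltac:(via (Gc ++ rm (And p q) (p :: q :: G)) (Dc ++ D); exact IHDer)).
      assert (H2 := IHc q (or_intror eq_refl) Gc Dc (Gc ++ Gc ++ rm (And p q) G) (Dc ++ Dc ++ D) Hq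
        ltac:(via (Gc ++ q :: Gc ++ rm (And p q) G) (Dc ++ Dc ++ D); exact H1)).
      via (Gc ++ Gc ++ Gc ++ rm (And p q) G) (Dc ++ Dc ++ Dc ++ D). exact H2.
    + via (And p q :: Gc ++ rm A G) (Dc ++ D). apply d_andL.
      via (Gc ++ rm A (p :: q :: G)) (Dc ++ D). exact IHDer.
  - via (Gc ++ rm A G) (And p q :: Dc ++ D). apply d_andR.
    + via (Gc ++ rm A G) (Dc ++ p :: D). exact IHDer1.
    + via (Gc ++ rm A G) (Dc ++ q :: D). exact IHDer2.
  -
    destruct (form_eq_dec (Or p q) A).
    + subst A. simpl in HD.
      assert (H1 := IHc p (or_introl eq_refl) Gc (q :: Dc) (Gc ++ rm (Or p q) G) (Dc ++ D) HD
        ltac:(via (Gc ++ rm (Or p q) (p :: G)) (Dc ++ D); exact IHDer1)).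
      assert (H2 := IHc q (or_intror eq_refl) (Gc ++ Gc ++ rm (Or p q) G) (Dc ++ Dc ++ D)
        (Gc ++ rm (Or p q) G) (Dc ++ D)
        ltac:(via (Gc ++ Gc ++ rm (Or p q) G) ((q :: Dc) ++ Dc ++ D); exact H1)
        ltac:(via (Gc ++ rm (Or p q) (q :: G)) (Dc ++ D); exact IHDer2)).
      via ((Gc ++ Gc ++ rm (Or p q) G) ++ Gc ++ rm (Or p q) G)
          ((Dc ++ Dc ++ D) ++ Dc ++ D). exact H2.
    + via (Or p q :: Gc ++ rm A G) (Dc ++ D). apply d_orL.
      * via (Gc ++ rm A (p :: G)) (Dc ++ D). exact IHDer1.
      * via (Gc ++ rm A (q :: G)) (Dc ++ D). exact IHDer2.
  - via (Gc ++ rm A G) (Or p q :: Dc ++ D). apply d_orR.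
    via (Gc ++ rm A G) (Dc ++ p :: q :: D). exact IHDer.
  -
    destruct (form_eq_dec (Imp p q) A).
    + subst A. simpl in HD.
      assert (H1 := IHc p (or_introl eq_refl) (Gc ++ rm (Imp p q) G) (Dc ++ D) Gc (q :: Dc)
        ltac:(via (Gc ++ rm (Imp p q) G) (Dc ++ p :: D); exact IHDer1) HD).
      assert (H2 := IHc q (or_intror eq_refl) ((Gc ++ rm (Imp p q) G) ++ Gc) ((Dc ++ D) ++ Dc)
        (Gc ++ rm (Imp p q) G) (Dc ++ D)
        ltac:(via ((Gc ++ rm (Imp p q) G) ++ Gc) ((Dc ++ D) ++ q :: Dc); exact H1)
        ltac:(via (Gc ++ rm (Imp p q) (q :: G)) (Dc ++ D); exact IHDer2)).
      via (((Gc ++ rm (Imp p q) G) ++ Gc) ++ Gc ++ rm (Imp p q) G)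
          (((Dc ++ D) ++ Dc) ++ Dc ++ D). exact H2.
    + via (Imp p q :: Gc ++ rm A G) (Dc ++ D). apply d_impL.
      * via (Gc ++ rm A G) (Dc ++ p :: D). exact IHDer1.
      * via (Gc ++ rm A (q :: G)) (Dc ++ D). exact IHDer2.
  - via (Gc ++ rm A G) (Imp p q :: Dc ++ D). apply d_impR.
    via (Gc ++ rm A (p :: G)) (Dc ++ q :: D). exact IHDer.
  - via (Gc ++ rm A G) (Box p :: Dc ++ D). apply (d_boxR _ _ _ _ _ p S); auto.
    via (Gc ++ rm A G) (Dc ++ bigAnd (map fst S) :: D). exact IHDer.
  -
    rename H0 into IHb.
    destruct (form_eq_dec (Box p) A).
    + subst A. simpl in HD. destruct HD as [S0 [Hth [Hsc Hd]]].
      set (S' := nodup pair_dec S0).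
      assert (Hinc : incl (map fst S') (map fst S0)).
      { intros x Hx. apply in_map_iff in Hx. destruct Hx as [r [E Hr]].
        apply in_map_iff. exists r; split; auto. eapply nodup_In; eauto. }
      assert (Hsc' : SC (map snd S') p).
      { apply HSC. apply HSC in Hsc. apply (struct _ _ _ _ _ _ _ Hsc); [|solve_incl].
        intros x Hx. apply in_map_iff in Hx. destruct Hx as [r [E Hr]].
        apply in_map_iff. exists r; split; auto. apply nodup_In; eauto. }
      assert (Hth' : forall r, In r S' -> Th (fst r) (snd r)).
      { intros r Hr. apply Hth. eapply nodup_In; eauto. }
      assert (H1 := IHb S' (NoDup_nodup _ _) Hth' Hsc').
      assert (Hb : Der Th SC false (bigAnd (map fst S0) :: Gc ++ rm (Box p) G) (Dc ++ D)).
      { apply bigAnd_L. via (Gc ++ rm (Box p) (map fst S' ++ G)) (Dc ++ D). exact H1. }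
      assert (Hbf : boxfree (bigAnd (map fst S0))).
      { apply bf_bigAnd. intros x Hx. apply in_map_iff in Hx. destruct Hx as [r [E Hr]].
        subst. apply (HT _ _ (Hth r Hr)). }
      assert (H2 := IHc _ Hbf Gc Dc (Gc ++ rm (Box p) G) (Dc ++ D) Hd Hb).
      via (Gc ++ Gc ++ rm (Box p) G) (Dc ++ Dc ++ D). exact H2.
    + via (Box p :: Gc ++ rm A G) (Dc ++ D). apply d_boxL.
      intros S Hn Ht Hs.
      via (Gc ++ rm A (map fst S ++ G)) (Dc ++ D). apply IHb; auto.
  - discriminate.
Qed.

Lemma L1 Th SC (HT : is_causal_theory Th)
  (HSC : forall ps p, SC ps p <-> Der Th SC true ps (p :: nil))
  A (IHc : forall B, smaller A B -> cutprop Th SC B) G' D'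
  (RP : Der Th SC false (A :: G') D') :
  forall Gl Dl, Der Th SC false Gl Dl -> Der Th SC false (Gl ++ G') (rm A Dl ++ D').
Proof.
  intros Gl Dl H. induction H.
  - via (G ++ G') (rm A D ++ D'). auto.
  - destruct (form_eq_dec p A).
    + subst A. via (p :: G') D'. exact RP.
    + via [p] [p]. apply d_ax.
  - via [Bot] (@nil form). apply d_bot.
  - destruct (form_eq_dec Top A).
    + subst A. via ((@nil form) ++ rm Top (Top :: G')) ((@nil form) ++ D').
      apply (L2 Th SC HT HSC Top IHc [] [] I _ _ RP).
    + via (@nil form) [Top]. apply d_top.
  - via (G ++ G') (rm A D ++ D'). auto.
  - via (G ++ G') (rm A D ++ D'). auto.
  - via ((p :: p :: G) ++ G') (rm A D ++ D'). auto.
  - via (G ++ G') (rm A (p :: p :: D) ++ D'). auto.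
  - via (Neg p :: G ++ G') (rm A D ++ D'). apply d_negL.
    via (G ++ G') (rm A (p :: D) ++ D'). exact IHDer.
  - destruct (form_eq_dec (Neg p) A).
    + subst A. via ((G ++ G') ++ rm (Neg p) (Neg p :: G')) ((rm (Neg p) D ++ D') ++ D').
      apply (L2 Th SC HT HSC (Neg p) IHc (G ++ G') (rm (Neg p) D ++ D')); [|exact RP].
      simpl. exact IHDer.
    + via (G ++ G') (Neg p :: rm A D ++ D'). apply d_negR. exact IHDer.
  - via (And p q :: G ++ G') (rm A D ++ D'). apply d_andL. exact IHDer.
  - destruct (form_eq_dec (And p q) A).
    + subst A. via ((G ++ G') ++ rm (And p q) (And p q :: G')) ((rm (And p q) D ++ D') ++ D').
      apply (L2 Th SC HT HSC (And p q) IHc (G ++ G') (rm (And p q) D ++ D')); [|exact RP].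
      simpl. split.
      * via (G ++ G') (rm (And p q) (p :: D) ++ D'). exact IHDer1.
      * via (G ++ G') (rm (And p q) (q :: D) ++ D'). exact IHDer2.
    + via (G ++ G') (And p q :: rm A D ++ D'). apply d_andR.
      * via (G ++ G') (rm A (p :: D) ++ D'). exact IHDer1.
      * via (G ++ G') (rm A (q :: D) ++ D'). exact IHDer2.
  - via (Or p q :: G ++ G') (rm A D ++ D'). apply d_orL.
    + exact IHDer1.
    + exact IHDer2.
  - destruct (form_eq_dec (Or p q) A).
    + subst A. via ((G ++ G') ++ rm (Or p q) (Or p q :: G')) ((rm (Or p q) D ++ D') ++ D').
      apply (L2 Th SC HT HSC (Or p q) IHc (G ++ G') (rm (Or p q) D ++ D')); [|exact RP].
      simpl. via (G ++ G') (rm (Or p q) (p :: q :: D) ++ D'). exact IHDer.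
    + via (G ++ G') (Or p q :: rm A D ++ D'). apply d_orR.
      via (G ++ G') (rm A (p :: q :: D) ++ D'). exact IHDer.
  - via (Imp p q :: G ++ G') (rm A D ++ D'). apply d_impL.
    + via (G ++ G') (rm A (p :: D) ++ D'). exact IHDer1.
    + exact IHDer2.
  - destruct (form_eq_dec (Imp p q) A).
    + subst A. via ((G ++ G') ++ rm (Imp p q) (Imp p q :: G')) ((rm (Imp p q) D ++ D') ++ D').
      apply (L2 Th SC HT HSC (Imp p q) IHc (G ++ G') (rm (Imp p q) D ++ D')); [|exact RP].
      simpl. via (p :: G ++ G') (rm (Imp p q) (q :: D) ++ D'). exact IHDer.
    + via (G ++ G') (Imp p q :: rm A D ++ D'). apply d_impR.
      via (p :: G ++ G') (rm A (q :: D) ++ D'). exact IHDer.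
  - destruct (form_eq_dec (Box p) A).
    + subst A. via ((G ++ G') ++ rm (Box p) (Box p :: G')) ((rm (Box p) D ++ D') ++ D').
      apply (L2 Th SC HT HSC (Box p) IHc (G ++ G') (rm (Box p) D ++ D')); [|exact RP].
      simpl. exists S. split; [auto|split; [auto|]].
      via (G ++ G') (rm (Box p) (bigAnd (map fst S) :: D) ++ D'). exact IHDer.
    + via (G ++ G') (Box p :: rm A D ++ D'). apply (d_boxR _ _ _ _ _ p S); auto.
      via (G ++ G') (rm A (bigAnd (map fst S) :: D) ++ D'). exact IHDer.
  - rename H0 into IHb.
    via (Box p :: G ++ G') (rm A D ++ D'). apply d_boxL.
    intros S Hn Ht Hs. via ((map fst S ++ G) ++ G') (rm A D ++ D'). apply IHb; auto.
  - discriminate.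
Qed.

Lemma cut_step Th SC (HT : is_causal_theory Th)
  (HSC : forall ps p, SC ps p <-> Der Th SC true ps (p :: nil))
  A (IHc : forall B, smaller A B -> cutprop Th SC B) : cutprop Th SC A.
Proof.
  intros G D G2 D2 H1 H2.
  via (G ++ G2) (rm A (A :: D) ++ D2).
  apply (L1 Th SC HT HSC A IHc G2 D2 H2 _ _ H1).
Qed.

Fixpoint fsize (f : form) : nat :=
  match f with
  | Var _ | Top | Bot => 1
  | Neg a | Box a => S (fsize a)
  | And a b | Or a b | Imp a b => S (fsize a + fsize b)
  end.

Lemma cut_bf Th SC (HT : is_causal_theory Th)
  (HSC : forall ps p, SC ps p <-> Der Th SC true ps (p :: nil)) :
  forall n A, fsize A < n -> boxfree A -> cutprop Th SC A.
Proof.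
  induction n; intros A Hs Hb; [lia|].
  apply cut_step; auto. intros B HB.
  destruct A; simpl in HB, Hs, Hb; try contradiction.
  - subst; apply IHn; auto; lia.
  - destruct Hb; destruct HB; subst; apply IHn; auto; lia.
  - destruct Hb; destruct HB; subst; apply IHn; auto; lia.
  - destruct Hb; destruct HB; subst; apply IHn; auto; lia.
Qed.

Lemma cut_all Th SC (HT : is_causal_theory Th)
  (HSC : forall ps p, SC ps p <-> Der Th SC true ps (p :: nil)) :
  forall n A, fsize A < n -> cutprop Th SC A.
Proof.
  induction n; intros A Hs; [lia|].
  apply cut_step; auto. intros B HB.
  destruct A; simpl in HB, Hs; try contradiction.
  - subst; apply IHn; lia.
  - destruct HB; subst; apply IHn; lia.
  - destruct HB; subst; apply IHn; lia.
  - destruct HB; subst; apply IHn; lia.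
  - apply (cut_bf Th SC HT HSC (S (fsize B))); auto.
Qed.

Theorem mainTheorem7 :
  forall (Th : causal_theory), is_causal_theory Th ->
  forall (SC : list form -> form -> Prop),
    (forall ps p, SC ps p <-> Der Th SC true ps (p :: nil)) ->
  forall (G D : list form), Der Th SC true G D -> Der Th SC false G D.
Proof.
  intros Th HT SC HSC G D H. induction H.
  - eapply d_perm; eauto.
  - apply d_ax.
  - apply d_bot.
  - apply d_top.
  - apply d_wL; auto.
  - apply d_wR; auto.
  - apply d_cL; auto.
  - apply d_cR; auto.
  - apply d_negL; auto.
  - apply d_negR; auto.
  - apply d_andL; auto.
  - apply d_andR; auto.
  - apply d_orL; auto.
  - apply d_orR; auto.
  - apply d_impL; auto.
  - apply d_impR; auto.
  - eapply d_boxR; eauto.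
  - apply d_boxL; auto.
  - apply (cut_all Th SC HT HSC (S (fsize p)) p ltac:(lia)).
    + apply (struct _ _ _ _ _ _ _ IHDer1); [solve_incl|].
      intros x Hx. apply in_app_iff in Hx. destruct Hx as [Hx|Hx]; [left|right; auto].
      symmetry; eapply repeat_spec; eauto.
    + apply (struct _ _ _ _ _ _ _ IHDer2); [|solve_incl].
      intros x Hx. apply in_app_iff in Hx. destruct Hx as [Hx|Hx]; [left|right; auto].
      symmetry; eapply repeat_spec; eauto.
Qed.
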